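(* Let $n,d\ge1$, $\omega\ge0$, $\alpha\in(0,1]$, $K_\omega,K_\alpha\in(0,d]$, and $0<\mu\le L\le L_{\max}$. For $r\in[0,1]$ put $K^r=(1-r)K_\omega+rK_\alpha$, $\mu^r_{\omega,\alpha}=rd/K^r$, $$\mathfrak m^r_{\mathrm{EF21\text{-}P+DIANA}}=K^r\Big(\frac{L}{\alpha\mu}+\frac{\omega L_{\max}}{n\mu}+\omega\Big)+d,$$ $$\mathfrak m^r_{\mathrm{realistic}}=K^r\Big(\sqrt{\tfrac{L\max\{\omega+1,\mu^r_{\omega,\alpha}\}}{\alpha\mu}}+\sqrt{\tfrac{L_{\max}\omega\max\{\omega+1,\mu^r_{\omega,\alpha}\}}{n\mu}}+\tfrac1\alpha+\omega+\mu^r_{\omega,\alpha}\Big)+d.$$ Then for all $r\in[0,1]$, $\mathfrak m^r_{\mathrm{realistic}}=\widetilde{\mathcal O}\big(\mathfrak m^r_{\mathrm{EF21\text{-}P+DIANA}}\big)$, i.e. $\mathfrak m^r_{\mathrm{realistic}}\le C\,\mathfrak m^r_{\mathrm{EF21\text{-}P+DIANA}}$ for a universal constant $C$ (up to logarithmic factors).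
   Context: $\mathfrak m^r_{\mathrm{EF21\text{-}P+DIANA}}$ is (up to logarithmic factors) the total communication complexity of the previous method EF21-P + DIANA, and $\mathfrak m^r_{\mathrm{realistic}}$ is (up to logarithmic factors) that of the new method 2Direction with its hyper-parameters chosen without knowledge of $L_{\max}/L$, for minimizing $f=\frac1n\sum_i f_i$ on $\mathbb R^d$ with $n$ workers, each $f_i$ being $L_i$-smooth and convex, $L_{\max}=\max_iL_i$, $f$ being $L$-smooth and $\mu$-strongly convex. $\omega$ and $K_\omega$ are the variance parameter and expected density of the worker (unbiased) compressors, $\alpha$ and $K_\alpha$ the contraction parameter and expected density of the server (biased) compressor, and the total communication complexity is $(1-r)\cdot(\text{worker-to-server cost})+r\cdot(\text{server-to-worker cost})$. *)

(* Defs.v *)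
From mathcomp Require Import all_boot all_order all_algebra.
Set Implicit Arguments. Unset Strict Implicit. Unset Printing Implicit Defensive.
Import Order.TTheory GRing.Theory Num.Theory.
Local Open Scope ring_scope.

Section Defs.
Variable R : rcfType.

Definition Kr (Kw Ka r : R) : R := (1 - r) * Kw + r * Ka.

Definition mu_r (d : nat) (Kw Ka r : R) : R := r * d%:R / Kr Kw Ka r.

Definition m_EF21P_DIANA (n d : nat) (w a Kw Ka mu L Lmax r : R) : R :=
  Kr Kw Ka r * (L / (a * mu) + w * Lmax / (n%:R * mu) + w) + d%:R.

Definition m_realistic (n d : nat) (w a Kw Ka mu L Lmax r : R) : R :=
  let M := Num.max (w + 1) (mu_r d Kw Ka r) in
  Kr Kw Ka r *
    (Num.sqrt (L * M / (a * mu))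
     + Num.sqrt (Lmax * w * M / (n%:R * mu))
     + a^-1 + w + mu_r d Kw Ka r) + d%:R.
End Defs.

(* Main.v *)
Require Import Defs.
From mathcomp Require Import all_boot all_order all_algebra.
From mathcomp Require Import lra.
Import Order.TTheory GRing.Theory Num.Theory.
Local Open Scope ring_scope.

Lemma sqrt_le_add (R : rcfType) (x y : R) : 0 <= x -> 0 <= y ->
  Num.sqrt (x * y) <= x + y.
Proof.
move=> hx hy.
have -> : x + y = `|x + y| by rewrite ger0_norm //; lra.
rewrite -sqrtr_sqr ler_sqrt; last by apply: sqr_ge0.
have h : 0 <= x * y by apply: mulr_ge0.
have h2 : 0 <= x * x by apply: mulr_ge0.
have h3 : 0 <= y * y by apply: mulr_ge0.
rewrite expr2; nra.
Qed.

Theorem theorem4 :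
  exists C : nat, forall (R : rcfType) (n d : nat) (w a Kw Ka mu L Lmax : R),
    (1 <= n)%N -> (1 <= d)%N -> 0 <= w -> 0 < a -> a <= 1 ->
    0 < Kw -> Kw <= d%:R -> 0 < Ka -> Ka <= d%:R ->
    0 < mu -> mu <= L -> L <= Lmax ->
    forall r : R, 0 <= r -> r <= 1 ->
      m_realistic n d w a Kw Ka mu L Lmax r
        <= C%:R * m_EF21P_DIANA n d w a Kw Ka mu L Lmax r.
Proof.
exists 6%N => R n d w a Kw Ka mu L Lmax hn hd hw ha ha1 hKw hKwd hKa hKad hmu hmuL hLL r hr hr1.
rewrite /m_realistic /m_EF21P_DIANA /=.
set K := Kr Kw Ka r.
set mr := mu_r d Kw Ka r.
set M := Num.max (w + 1) mr.
set D := d%:R.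
have hK : 0 < K by rewrite /K /Kr; nra.
have hKd : K <= D by rewrite /K /Kr; nra.
have hKmr : K * mr = r * D by rewrite /mr /mu_r -/K mulrC divfK // gt_eqF.
have hmr : 0 <= mr by rewrite /mr /mu_r -/K; apply: divr_ge0 => //; [apply: mulr_ge0 | apply: ltW].
have hM0 : 0 <= M by rewrite /M le_max; apply/orP; left; lra.
have hM1 : M <= w + 1 + mr by rewrite /M ge_max; apply/andP; split; lra.
have hn0 : 0 < n%:R :> R by rewrite ltr0n.
have hamu : 0 < a * mu by apply: mulr_gt0.
have hnmu : 0 < n%:R * mu by apply: mulr_gt0.
set X := L / (a * mu).
set W := w * Lmax / (n%:R * mu).
have hX : 0 <= X by apply: divr_ge0; lra.
have hW : 0 <= W by apply: divr_ge0; [apply: mulr_ge0; lra | lra].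
have hai : a^-1 <= X.
  rewrite /X invfM mulrCA ler_pMr ?invr_gt0 //.
  by rewrite ler_pdivlMr // mul1r.
have hs1 : Num.sqrt (L * M / (a * mu)) <= X + M.
  by rewrite mulrAC; apply: sqrt_le_add.
have hs2 : Num.sqrt (Lmax * w * M / (n%:R * mu)) <= W + M.
  by rewrite mulrAC [Lmax * w]mulrC; apply: sqrt_le_add.
set s1 := Num.sqrt _ in hs1 *.
set s2 := Num.sqrt _ in hs2 *.
have e : K * (s1 + s2 + a^-1 + w + mr) <= K * (X + M + (W + M) + X + w + mr).
  by rewrite ler_pM2l //; lra.
have e2 : K * M <= K * (w + 1 + mr) by rewrite ler_pM2l.
have e3 : 0 <= K * (X + W + w) by apply: mulr_ge0; lra.
have f1 : 0 <= K * X by apply: mulr_ge0; lra.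
have f2 : 0 <= K * W by apply: mulr_ge0; lra.
have f3 : 0 <= K * w by apply: mulr_ge0; lra.
have e4 : r * D <= D by rewrite ler_piMl // ler0n.
rewrite !mulrDr in e e2 e3 *.
rewrite hKmr in e e2 *.
rewrite mulr1 in e2.
clearbody s1 s2 X W M mr K D.
clear -e e2 f1 f2 f3 e4 hKd.
lra.
Qed.
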